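(* Let $\mathbb{F}$ be a field and $n\ge3$. Let $\mathcal{A}_n$ be the $n\times n$ znz-pattern whose nonzero entries are exactly the diagonal positions $(i,i)$ for $1\le i\le n$, the superdiagonal positions $(i,i+1)$ for $1\le i\le n-1$, and the position $(n,1)$. Then $\mathcal{A}_n$ is potentially nilpotent over $\mathbb{F}$ if and only if $\mathbb{F}$ contains all the $n$-th roots of unity.
   Context: A znz-pattern is an $n\times n$ matrix with entries in $\{*,0\}$; a realization over $\mathbb{F}$ is a matrix in $M_n(\mathbb{F})$ whose nonzero entries are exactly at the $*$ positions; potentially nilpotent over $\mathbb{F}$ means some realization is nilpotent. $\mathbb{F}$ contains all the $n$-th roots of unity if $x^n-1$ factors into $n$ linear factors over $\mathbb{F}$. *)

(* Defs.v *)
From HB Require Import structures.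
From mathcomp Require Import all_boot all_order all_algebra.
Set Implicit Arguments. Unset Strict Implicit. Unset Printing Implicit Defensive.
Import GRing.Theory.
Local Open Scope ring_scope.

(* A znz-pattern: n x n matrix of booleans, true = "*" (nonzero), false = 0. *)
Definition znz_pattern (n : nat) := 'M[bool]_n.

Definition realization (F : fieldType) (n : nat) (P : znz_pattern n)
  (A : 'M[F]_n) : Prop :=
  forall i j : 'I_n, (A i j != 0) = P i j.

(* Matrix power via iterated matrix product (works for every n). *)
Definition mxpow (F : fieldType) (n : nat) (A : 'M[F]_n) (k : nat) : 'M[F]_n :=
  iter k (fun B => A *m B) 1%:M.

Definition mx_nilpotent (F : fieldType) (n : nat) (A : 'M[F]_n) : Prop :=
  exists k : nat, mxpow A k = 0.

Definition potentially_nilpotent (F : fieldType) (n : nat) (P : znz_pattern n) : Prop :=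
  exists A : 'M[F]_n, realization P A /\ mx_nilpotent A.

Definition contains_all_nth_roots_of_unity (F : fieldType) (n : nat) : Prop :=
  exists s : seq F, ('X^n - 1 : {poly F}) = \prod_(a <- s) ('X - a%:P).

(* The pattern A_n (0-based indices): diagonal (i,i), superdiagonal (i,i+1),
   and the corner (n-1, 0). *)
Definition pattern_An (n : nat) : znz_pattern n :=
  \matrix_(i < n, j < n)
    [|| (i : nat) == j, (i : nat).+1 == j | ((i : nat) == n.-1) && ((j : nat) == 0%N)].

(* Main.v *)
Require Import Defs.
From HB Require Import structures.
From mathcomp Require Import all_boot all_order all_algebra.
Set Implicit Arguments. Unset Strict Implicit. Unset Printing Implicit Defensive.
Import GRing.Theory.
Local Open Scope ring_scope.

Section Key.
Variables (F : fieldType) (m : nat) (A : 'M[F]_m.+1).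
Hypothesis HA : realization (pattern_An m.+1) A.
Hypothesis hm : (2 <= m)%N.

Lemma Apat (i j : 'I_m.+1) :
  (A i j != 0) = [|| (i : nat) == j, (i : nat).+1 == j | ((i : nat) == m) && ((j : nat) == 0%N)].
Proof. by rewrite HA mxE. Qed.

Lemma Az (i j : 'I_m.+1) :
  ~~ [|| (i : nat) == j, (i : nat).+1 == j | ((i : nat) == m) && ((j : nat) == 0%N)] -> A i j = 0.
Proof. by rewrite -Apat negbK => /eqP. Qed.

Notation ee k := (delta_mx 0 (inord k) : 'rV[F]_m.+1).
Definition dg (k : nat) := A (inord k) (inord k).
Definition bb (k : nat) := A (inord k) (inord k.+1).
Definition cc := A (inord m) (inord 0).
Definition FF (k : nat) := A - (dg k)%:M.

Lemma inordv (k : nat) : (k <= m)%N -> ((inord k : 'I_m.+1) : nat) = k.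
Proof. by move=> h; rewrite inordK. Qed.

Lemma rowF_lt (k : nat) : (k < m)%N ->
  row (inord k) (FF k) = bb k *: ee k.+1.
Proof.
move=> hk; apply/rowP => j; rewrite !mxE /dg /bb.
have e1 := inordv (ltnW hk); have e2 := inordv hk.
rewrite -!val_eqE /= e1 e2.
have [ejk|njk] := eqVneq (j : nat) k.
  have ej : j = inord k by apply/val_inj; rewrite /= e1.
  by rewrite mulr1n ej subrr e1 (_ : (k == k.+1) = false) ?mulr0 //; apply/negbTE; rewrite neq_ltn ltnSn.
rewrite mulr0n subr0.
have [ejk1|njk1] := eqVneq (j : nat) k.+1.
  have -> : j = inord k.+1 by apply/val_inj; rewrite /= e2.
  by rewrite mulr1.
by rewrite mulr0 Az //= e1 !(eq_sym _ (nat_of_ord j)) (negbTE njk) (negbTE njk1) (ltn_eqF hk).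
Qed.

Lemma rowF_m : row (inord m) (FF m) = cc *: ee 0.
Proof.
apply/rowP => j; rewrite !mxE /dg /cc.
have e1 := inordv (leqnn m); have e0 := inordv (leq0n m).
rewrite -!val_eqE /= e1 e0.
have [ejk|njk] := eqVneq (j : nat) m.
  have ej : j = inord m by apply/val_inj; rewrite /= e1.
  rewrite mulr1n ej subrr e1 (_ : (m == 0%N) = false) ?mulr0 //.
  by apply/negbTE; rewrite -lt0n; apply: leq_trans hm.
rewrite mulr0n subr0.
have [ej0|nj0] := eqVneq (j : nat) 0%N.
  have -> : j = inord 0 by apply/val_inj; rewrite /= e0.
  by rewrite mulr1.
rewrite mulr0 Az //= e1 !(eq_sym _ (nat_of_ord j)) (negbTE njk) (negbTE nj0) andbF orbF /=.
by rewrite neq_ltn ltn_ord.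
Qed.

Lemma cs (B : 'M[F]_m.+1) (b : F) : GRing.comm B b%:M.
Proof. by rewrite /GRing.comm -!mulmxE scalar_mxC. Qed.

Lemma commFF i j : GRing.comm (FF i) (FF j).
Proof.
apply: commrB; last exact: cs.
by apply: commr_sym; apply: commrB; [apply: commr_refl | apply: cs].
Qed.

Lemma row0_prod t : (t <= m)%N ->
  ee 0 *m \prod_(0 <= i < t) FF i
  = (\prod_(0 <= i < t) bb i) *: ee t.
Proof.
elim: t => [_|t IH ht].
  by rewrite !big_geq // scale1r; apply: mulmx1.
have -> : \prod_(0 <= i < t.+1) FF i = (\prod_(0 <= i < t) FF i) *m FF t by rewrite big_nat_recr.
rewrite mulmxA IH; last exact: ltnW.
by rewrite -scalemxAl -rowE rowF_lt // big_nat_recr //= scalerA.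
Qed.

Definition KK := cc * \prod_(0 <= i < m) bb i.
Definition PP := \prod_(0 <= i < m.+1) FF i.

Lemma bb_nz k : (k < m)%N -> bb k != 0.
Proof.
move=> hk; rewrite /bb Apat !inordv ?eqxx ?orbT //; exact: ltnW.
Qed.

Lemma cc_nz : cc != 0.
Proof. by rewrite /cc Apat !inordv ?eqxx ?andbT ?orbT. Qed.

Lemma dg_nz k : (k <= m)%N -> dg k != 0.
Proof. by move=> hk; rewrite /dg Apat !inordv ?eqxx. Qed.

Lemma KK_nz : KK != 0.
Proof.
rewrite /KK mulf_neq0 ?cc_nz // prodf_seq_neq0.
by apply/allP => i; rewrite mem_index_iota => /andP[_ hi]; apply: bb_nz.
Qed.

Lemma rows_PP j : (j <= m)%N -> row (inord j) PP = KK *: ee j.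
Proof.
elim: j => [_|j IH hj].
  have -> : PP = (\prod_(0 <= i < m) FF i) *m FF m by rewrite /PP big_nat_recr.
  rewrite rowE mulmxA row0_prod // -scalemxAl -rowE rowF_m.
  by rewrite scalerA /KK mulrC.
apply: (scalerI (bb_nz hj)).
rewrite rowE scalemxAl -rowF_lt // rowE -mulmxA.
have -> : FF j *m PP = PP *m FF j by apply: commr_prod => i _; apply: commFF.
rewrite mulmxA -rowE IH; last exact: ltnW.
by rewrite -scalemxAl -rowE rowF_lt // !scalerA mulrC.
Qed.

Lemma PP_eq : PP = KK%:M.
Proof.
apply/row_matrixP => i.
rewrite -[i]inord_val rows_PP; last by rewrite -ltnS.
by rewrite rowE mul_mx_scalar.
Qed.

Lemma Apow t : (t <= m)%N ->
  (A ^+ t) (inord 0) (inord t) = \prod_(0 <= i < t) bb i /\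
  forall u : 'I_m.+1, (t < u)%N -> (A ^+ t) (inord 0) u = 0.
Proof.
elim: t => [_|t IH ht].
  rewrite expr0 big_geq // !mxE eqxx; split => // u hu.
  by rewrite !mxE -val_eqE /= inordv // eq_sym (negbTE (lt0n_neq0 hu)).
have [IH1 IH2] := IH (ltnW ht).
have e0 := inordv (leq0n m); have et := inordv (ltnW ht); have et1 := inordv ht.
split.
  rewrite exprSr -mulmxE mxE (bigD1 (inord t)) //= IH1 big_nat_recr //=.
  rewrite [X in _ + X]big1 ?addr0 //.
  move=> v hv; have [ltv|lev] := ltnP t v; first by rewrite IH2 // mul0r.
  rewrite Az ?mulr0 //= et1 eqSS /= andbF orbF negb_or; apply/andP; split.
  - by rewrite neq_ltn ltnS lev.
  - by move: hv; rewrite -val_eqE /= et.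
move=> u hu; rewrite exprSr -mulmxE mxE big1 // => v _.
have [ltv|lev] := ltnP t v; first by rewrite IH2 // mul0r.
rewrite Az ?mulr0 //= !negb_or; apply/and3P; split.
- by rewrite neq_ltn (leq_ltn_trans lev) // ltnW.
- by rewrite neq_ltn (leq_ltn_trans _ hu) // ltnS.
- by rewrite negb_and -lt0n (leq_ltn_trans _ hu) ?orbT.
Qed.

Lemma beta_nz t : (t <= m)%N -> \prod_(0 <= i < t) bb i != 0.
Proof.
move=> ht; rewrite prodf_seq_neq0.
by apply/allP => i; rewrite mem_index_iota => /andP[_ hi]; apply: bb_nz; apply: leq_trans ht.
Qed.

Lemma Am_nz : A ^+ m != 0.
Proof.
have [H _] := Apow (leqnn m); apply/eqP => Hm; move: H; rewrite Hm mxE => H.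
by move: (beta_nz (leqnn m)); rewrite -H eqxx.
Qed.
End Key.

Lemma fwd (F : fieldType) (m : nat) (hm : (2 <= m)%N) (A : 'M[F]_m.+1)
  (HA : realization (pattern_An m.+1) A) (k : nat) (Hk : A ^+ k = 0) :
  contains_all_nth_roots_of_unity F m.+1.
Proof.
set ds := [seq dg A i | i <- iota 0 m.+1].
set p : {poly F} := \prod_(a <- ds) ('X - a%:P).
have hpA : horner_mx A p = (KK A)%:M.
  rewrite -(PP_eq HA hm) /p big_map rmorph_prod /PP.
  by apply: eq_bigr => i _; rewrite rmorphB /= horner_mx_X horner_mx_C.
set q := p - (KK A)%:P.
have hqA : horner_mx A q = 0 by rewrite rmorphB /= hpA horner_mx_C subrr.
have sp : size p = m.+2 by rewrite size_prod_XsubC size_map size_iota.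
have mp : p \is monic by apply: monic_prod_XsubC.
have sq : size q = m.+2 by rewrite size_polyDl sp // size_polyN size_polyC; case: (_ != 0).
have mq : q \is monic.
  by rewrite monicE lead_coefDl ?sp ?size_polyN ?size_polyC; [apply: mp | case: (_ != 0)].
have dq := mxminpoly_min hqA.
have dk : mxminpoly A %| ('X - 0%:P) ^+ k.
  by apply/mxminpoly_minP; rewrite subr0 rmorphXn /= horner_mx_X Hk.
have [k' lek' ek'] := dvdp_exp_XsubCP dk.
have Ak' : A ^+ k' = 0.
  apply/eqP; rewrite -[A]horner_mx_X -rmorphXn; apply/eqP/mxminpoly_minP.
  by rewrite (eqp_dvdl _ ek') subr0 dvdpp.
have ltmk : (m < k')%N.
  rewrite ltnNge; apply/negP => lekm; move/eqP: (Am_nz HA); apply.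
  have -> : A ^+ m = A ^+ (m - k') * A ^+ k' by rewrite -exprD subnK.
  by rewrite Ak' mulr0.
have dXq : ('X - 0%:P) ^+ m.+1 %| q.
  apply: dvdp_trans (dvdp_exp2l _ ltmk) _; apply: dvdp_trans dq.
  by rewrite (eqp_dvdr _ ek') dvdpp.
have eq_q : q = 'X^(m.+1).
  have := dvdp_size_eqp dXq; rewrite subr0 size_polyXn sq eqxx => /esym.
  by rewrite eqp_monic ?monicXn // => /eqP ->.
have ep : p = 'X^(m.+1) + (KK A)%:P by rewrite -eq_q subrK.
set δ := dg A 0.
have dnz : δ != 0 by apply: dg_nz.
have rd : root p δ by rewrite root_prod_XsubC; apply: map_f; rewrite mem_iota.
have eK : KK A = - δ ^+ m.+1.
  by move: rd; rewrite ep rootE hornerD hornerXn hornerC addrC addr_eq0 => /eqP.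
exists [seq a / δ | a <- ds].
apply: (scalerI (expf_neq0 m.+1 dnz)).
rewrite big_map /ds big_map -[iota 0 m.+1]/(index_iota 0 m.+1).
rewrite -(prodr_const_nat 0 m.+1 δ) -scaler_prod.
have -> : \prod_(0 <= i < m.+1) (δ *: ('X - (dg A i / δ)%:P))
        = \prod_(0 <= i < m.+1) (('X - (dg A i)%:P) \Po (δ *: 'X)).
  apply: eq_bigr => i _.
  rewrite comp_polyB comp_polyX comp_polyC scalerBr; congr (_ - _).
  by rewrite -mul_polyC -polyCM mulrC divfK.
rewrite -rmorph_prod prodr_const_nat.
have -> : \prod_(0 <= i < m.+1) ('X - (dg A i)%:P) = p by rewrite /p /ds big_map.
rewrite /= ep comp_polyD comp_polyC comp_Xn_poly.
by rewrite subn0 exprZn eK scalerBr -alg_polyC scaleNr.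
Qed.

Lemma bwd (F : fieldType) (m : nat) (hm : (2 <= m)%N) (s : seq F)
  (hs : ('X^(m.+1) - 1 : {poly F}) = \prod_(a <- s) ('X - a%:P)) :
  exists A : 'M[F]_m.+1, realization (pattern_An m.+1) A /\ A ^+ m.+1 = 0.
Proof.
have ss : size s = m.+1.
  by apply/eqP; rewrite -eqSS -(size_prod_XsubC s id) -hs size_Xn_sub_1.
have snz i : (i < m.+1)%N -> s`_i != 0.
  move=> hi; apply/eqP => h0.
  have : root ('X^(m.+1) - 1 : {poly F}) s`_i by rewrite hs root_prod_XsubC mem_nth ?ss.
  by rewrite rootE hornerD hornerN hornerXn hornerC h0 expr0n /= sub0r oppr_eq0 oner_eq0.
pose A : 'M[F]_m.+1 := \matrix_(i, j) (if (i : nat) == j then s`_i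
   else if (i : nat).+1 == j then 1 else if ((i : nat) == m) && ((j : nat) == 0%N) then -1 else 0).
have HA : realization (pattern_An m.+1) A.
  move=> i j; rewrite !mxE.
  have [eij|nij] := eqVneq (i : nat) j; first by rewrite snz.
  have [eij|nij1] := eqVneq (i : nat).+1 j; first by rewrite oner_eq0.
  by case: (_ && _); rewrite ?oppr_eq0 ?oner_eq0 ?eqxx.
exists A; split => //.
have hd k : (k <= m)%N -> dg A k = s`_k.
  by move=> hk; rewrite /dg mxE eqxx inordv.
have hb k : (k < m)%N -> bb A k = 1.
  move=> hk; rewrite /bb mxE !inordv ?eqxx //; last exact: ltnW.
  by rewrite (ltn_eqF (ltnSn k)).
have hc : cc A = -1.
  rewrite /cc mxE !inordv ?eqxx //=.
  by rewrite (negbTE (lt0n_neq0 (ltn_trans (ltnSn 0) hm))).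
have hK : KK A = -1.
  rewrite /KK hc big_nat_cond big1 ?mulr1 // => i /andP[/andP[_ hi] _]; exact: hb.
have := PP_eq HA hm; rewrite hK /PP.
have -> : \prod_(0 <= i < m.+1) FF A i = horner_mx A ('X^(m.+1) - 1).
  rewrite hs [in RHS](big_nth 0) ss rmorph_prod; apply: eq_big_nat => i /andP[_ hi].
  by rewrite rmorphB /= horner_mx_X horner_mx_C /FF hd.
rewrite rmorphB /= rmorphXn /= horner_mx_X horner_mx_C => h.
rewrite -(subrK 1 (A ^+ m.+1)) h raddfN /=.
exact: addNr.
Qed.

Lemma mxpowE (F : fieldType) (m : nat) (A : 'M[F]_m.+1) k : mxpow A k = A ^+ k.
Proof.
elim: k => [|k IH]; first by rewrite /mxpow /= expr0.
by rewrite /mxpow iterS -/(mxpow A k) IH exprS mulmxE.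
Qed.

Theorem theorem4p6 (F : fieldType) (n : nat) (hn : (3 <= n)%N) :
  potentially_nilpotent F (pattern_An n) <-> contains_all_nth_roots_of_unity F n.
Proof.
case: n hn => [//|m] hm.
split.
  move=> [A [HA [k Hk]]]; apply: (fwd hm HA (k := k)); by rewrite -mxpowE.
move=> [s hs]; have [A [HA HAn]] := bwd hm hs.
by exists A; split => //; exists m.+1; rewrite mxpowE.
Qed.
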